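(* Let $S$ be a commutative ring, $R$ an $S$-algebra, $E$ an injective cogenerator of $\mathrm{Mod}\text{-}S$, and $(-)^d=\operatorname{Hom}_S(-,E)$, viewed as contravariant functors from left $R$-modules to right $R$-modules and from right $R$-modules to left $R$-modules. Let $P_2\to P_1\xrightarrow{\zeta}P_0\to M\to 0$ be a projective presentation of a left $R$-module $M$ (so $0\to M^d\to P_0^d\xrightarrow{\zeta^d}P_1^d$ is an injective copresentation of the right module $M^d$). Then: (1) If $X$ is a right $R$-module with $X\in\mathcal{B}_{\zeta^d}$, then $X^d\in\mathcal{D}_\zeta$. (2) If $P_0,P_1,P_2$ are finitely presented and $Y$ is a left $R$-module with $Y\in\mathcal{D}_\zeta$, then $Y^d\in\mathcal{B}_{\zeta^d}$. (3) If $P_0,P_1,P_2$ are finitely presented, then $M$ is partial silting with respect to $\zeta$ if and only if $M^d$ is partial cosilting with respect to $\zeta^d$.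
   Context: For a homomorphism $\zeta:Q_0\to Q_1$ of right $R$-modules, $\mathcal{B}_\zeta=\{X \mid \operatorname{Hom}_R(X,\zeta):\operatorname{Hom}_R(X,Q_0)\to\operatorname{Hom}_R(X,Q_1)\text{ is an epimorphism}\}$. For a homomorphism $\sigma:P_1\to P_0$ of left $R$-modules, $\mathcal{D}_\sigma=\{Y \mid \operatorname{Hom}_R(\sigma,Y):\operatorname{Hom}_R(P_0,Y)\to\operatorname{Hom}_R(P_1,Y)\text{ is an epimorphism}\}$. A left module $M$ with projective presentation $P_1\xrightarrow{\sigma}P_0\to M\to 0$ is partial silting with respect to $\sigma$ if $M\in\mathcal{D}_\sigma$ and $\mathcal{D}_\sigma$ is closed under direct sums; it is silting with respect to $\sigma$ if $\operatorname{Gen}(M)=\mathcal{D}_\sigma$, where $\operatorname{Gen}(M)$ is the class of epimorphic images of direct sums of copies of $M$. A right module $T$ with injective copresentation $0\to T\to Q_0\xrightarrow{\zeta}Q_1$ ($Q_0,Q_1$ injective) is partial cosilting with respect to $\zeta$ if $T\in\mathcal{B}_\zeta$ and $\mathcal{B}_\zeta$ is closed under direct products; it is cosilting with respect to $\zeta$ if $\operatorname{Cogen}(T)=\mathcal{B}_\zeta$, where $\operatorname{Cogen}(T)$ is the class of modules embeddable in a direct product of copies of $T$. *)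

(* Defs.v *)
From HB Require Import structures.
From mathcomp Require Import all_boot all_algebra.
From Stdlib Require Import ClassicalEpsilon FunctionalExtensionality ProofIrrelevance.

Set Implicit Arguments.
Unset Strict Implicit.
Unset Printing Implicit Defensive.

Import GRing.Theory.
Local Open Scope ring_scope.

(* right R-modules are left R^c-modules).                              *)

Section ModuleNotions.
Variable A : pzRingType.

Definition Bclass (Q0 Q1 : lmodType A) (zeta : Q0 -> Q1) (X : lmodType A) : Prop :=
  forall g : {linear X -> Q1}, exists h : {linear X -> Q0},
    forall x, g x = zeta (h x).

Definition Dclass (P1 P0 : lmodType A) (sigma : P1 -> P0) (Y : lmodType A) : Prop :=
  forall g : {linear P1 -> Y}, exists h : {linear P0 -> Y},
    forall x, g x = h (sigma x).

Definition is_coproduct (I : Type) (M : I -> lmodType A) (D : lmodType A)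
    (inj : forall i, {linear M i -> D}) : Prop :=
  forall (N : lmodType A) (f : forall i, {linear M i -> N}),
    (exists h : {linear D -> N}, forall i x, h (inj i x) = f i x) /\
    (forall h1 h2 : {linear D -> N},
        (forall i x, h1 (inj i x) = h2 (inj i x)) -> forall d, h1 d = h2 d).

Definition is_product (I : Type) (M : I -> lmodType A) (D : lmodType A)
    (pr : forall i, {linear D -> M i}) : Prop :=
  forall (N : lmodType A) (f : forall i, {linear N -> M i}),
    (exists h : {linear N -> D}, forall i x, pr i (h x) = f i x) /\
    (forall h1 h2 : {linear N -> D},
        (forall i x, pr i (h1 x) = pr i (h2 x)) -> forall x, h1 x = h2 x).

Definition closed_under_sums (C : lmodType A -> Prop) : Prop :=
  forall (I : Type) (M : I -> lmodType A) (D : lmodType A)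
         (inj : forall i, {linear M i -> D}),
    is_coproduct inj -> (forall i, C (M i)) -> C D.

Definition closed_under_products (C : lmodType A -> Prop) : Prop :=
  forall (I : Type) (M : I -> lmodType A) (D : lmodType A)
         (pr : forall i, {linear D -> M i}),
    is_product pr -> (forall i, C (M i)) -> C D.

Definition projective_module (P : lmodType A) : Prop :=
  forall (U V : lmodType A) (g : {linear U -> V}) (f : {linear P -> V}),
    (forall v, exists u, g u = v) ->
    exists h : {linear P -> U}, forall p, g (h p) = f p.

Definition injective_module (Q : lmodType A) : Prop :=
  forall (U V : lmodType A) (g : {linear U -> V}) (f : {linear U -> Q}),
    injective g ->
    exists h : {linear V -> Q}, forall u, h (g u) = f u.

Definition cogenerator_module (Q : lmodType A) : Prop :=
  forall (U V : lmodType A) (g : {linear U -> V}),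
    (exists u, g u != 0) ->
    exists f : {linear V -> Q}, exists u, f (g u) != 0.

Definition finitely_presented (P : lmodType A) : Prop :=
  exists (n m : nat) (v : 'I_n -> P) (w : 'I_m -> 'I_n -> A),
    (forall p : P, exists a : 'I_n -> A, p = \sum_i a i *: v i) /\
    (forall a : 'I_n -> A, \sum_i a i *: v i = 0 <->
       exists c : 'I_m -> A, forall i, a i = \sum_j c j * w j i).

Definition projective_presentation (M P0 P1 P2 : lmodType A)
    (xi : {linear P2 -> P1}) (zeta : {linear P1 -> P0}) (pi : {linear P0 -> M})
    : Prop :=
  [/\ projective_module P0, projective_module P1 & projective_module P2] /\
  [/\ (forall m, exists p, pi p = m),
      (forall p, pi p = 0 <-> exists q, zeta q = p) &
      (forall q, zeta q = 0 <-> exists r, xi r = q)].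

End ModuleNotions.

Definition partial_silting (A : pzRingType) (P1 P0 : lmodType A)
    (sigma : P1 -> P0) (M : lmodType A) : Prop :=
  Dclass sigma M /\ closed_under_sums (Dclass sigma).

Definition partial_cosilting (A : pzRingType) (Q0 Q1 : lmodType A)
    (zeta : Q0 -> Q1) (T : lmodType A) : Prop :=
  Bclass zeta T /\ closed_under_products (Bclass zeta).

Section Classical.
Variable T : Type.

Definition ceq (x y : T) : bool :=
  if excluded_middle_informative (x = y) then true else false.

Lemma ceqP : Equality.axiom ceq.
Proof.
by move=> x y; rewrite /ceq; case: excluded_middle_informative => h;
  [apply: ReflectT | apply: ReflectF].
Qed.

Definition cfind (P : pred T) (n : nat) : option T :=
  match excluded_middle_informative (exists x, P x) with
  | left H => Some (proj1_sig (constructive_indefinite_description _ H))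
  | right _ => None
  end.

Lemma cfind_correct P n x : cfind P n = Some x -> P x.
Proof.
rewrite /cfind; case: excluded_middle_informative => // H [<-].
exact: proj2_sig (constructive_indefinite_description _ H).
Qed.

Lemma cfind_complete (P : pred T) : (exists x, P x) -> exists n, cfind P n.
Proof.
by move=> H; exists 0%N; rewrite /cfind; case: excluded_middle_informative.
Qed.

Lemma cfind_ext (P Q : pred T) : P =1 Q -> cfind P =1 cfind Q.
Proof. by move=> /functional_extensionality ->. Qed.

End Classical.

Section DualCarrier.
Variables (S : comNzRingType) (A : pzRingType) (sigma : S -> A).
Variables (E : lmodType S) (X : lmodType A).

Definition Slinear (f : X -> E) : Prop :=
  forall s x y, f (sigma s *: x + y) = s *: f x + f y.

Record dualT := Dual { dfun :> X -> E; dfunP : Slinear dfun }.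

Lemma dual_ext (f g : dualT) : (forall x, f x = g x) -> f = g.
Proof.
case: f g => f fP [g gP] /= /functional_extensionality efg.
by subst g; rewrite (proof_irrelevance _ fP gP).
Qed.

HB.instance Definition _ := hasDecEq.Build dualT (@ceqP dualT).
HB.instance Definition _ :=
  hasChoice.Build dualT (@cfind_correct dualT) (@cfind_complete dualT)
    (@cfind_ext dualT).

Lemma Slinear0 : Slinear (fun _ => 0).
Proof. by move=> s x y; rewrite scaler0 addr0. Qed.

Lemma SlinearN (f : dualT) : Slinear (fun x => - f x).
Proof. by move=> s x y; rewrite dfunP opprD scalerN. Qed.

Lemma SlinearD (f g : dualT) : Slinear (fun x => f x + g x).
Proof.
by move=> s x y; rewrite !dfunP scalerDr addrACA.
Qed.

Definition dual0 := Dual Slinear0.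
Definition dualN f := Dual (SlinearN f).
Definition dualD f g := Dual (SlinearD f g).

Lemma dualDA : associative dualD.
Proof. by move=> f g h; apply: dual_ext => x /=; rewrite addrA. Qed.
Lemma dualDC : commutative dualD.
Proof. by move=> f g; apply: dual_ext => x /=; rewrite addrC. Qed.
Lemma dual0D : left_id dual0 dualD.
Proof. by move=> f; apply: dual_ext => x /=; rewrite add0r. Qed.
Lemma dualND : left_inverse dual0 dualN dualD.
Proof. by move=> f; apply: dual_ext => x /=; rewrite addNr. Qed.

HB.instance Definition _ :=
  GRing.isZmodule.Build dualT dualDA dualDC dual0D dualND.

End DualCarrier.

Lemma Slinear_add (S : comNzRingType) (A : pzRingType) (sigma : S -> A)
  (E : lmodType S) (X : lmodType A) (f : dualT sigma E X) :
  sigma 1 = 1 -> forall x y, f (x + y) = f x + f y.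
Proof. by move=> s1 x y; have := dfunP f 1 x y; rewrite s1 !scale1r. Qed.

Section Duality.
Variables (S : comNzRingType) (R : algType S) (E : lmodType S).

Definition alg_sigma (s : S) : R := s%:A.
Definition alg_sigma_c (s : S) : R^c := (s%:A : R).

Lemma alg_sigma_central s (b : R) : alg_sigma s * b = b * alg_sigma s.
Proof. by rewrite /alg_sigma mulr_algl mulr_algr. Qed.

Lemma alg_sigma1 : alg_sigma 1 = 1. Proof. by rewrite /alg_sigma scale1r. Qed.
Lemma alg_sigma_c1 : alg_sigma_c 1 = 1. Proof. exact: alg_sigma1. Qed.

Section DualLeft.
Variable X : lmodType R.

Definition dualL := dualT alg_sigma E X.
HB.instance Definition _ := GRing.Zmodule.on dualL.

Lemma dualL_scaleP (b : R^c) (f : dualL) :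
  Slinear alg_sigma (fun x : X => f ((b : R) *: x)).
Proof.
move=> s x y; rewrite scalerDr scalerA -alg_sigma_central -scalerA.
exact: dfunP.
Qed.

Definition dualL_scale (b : R^c) (f : dualL) : dualL := Dual (dualL_scaleP b f).

Lemma dualL_scalerA a b f :
  dualL_scale a (dualL_scale b f) = dualL_scale (a * b) f.
Proof. by apply: dual_ext => x /=; rewrite scalerA. Qed.

Lemma dualL_scale1r : left_id 1 dualL_scale.
Proof. by move=> f; apply: dual_ext => x /=; rewrite scale1r. Qed.

Lemma dualL_scalerDr : right_distributive dualL_scale +%R.
Proof. by move=> b f g; apply: dual_ext => x. Qed.

Lemma dualL_scalerDl f : {morph dualL_scale^~ f : a b / a + b}.
Proof.
move=> a b; apply: dual_ext => x /=.
by rewrite scalerDl (Slinear_add _ alg_sigma1).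
Qed.

HB.instance Definition _ :=
  GRing.Zmodule_isLmodule.Build R^c dualL
    dualL_scalerA dualL_scale1r dualL_scalerDr dualL_scalerDl.

End DualLeft.

Section DualRight.
Variable X : lmodType R^c.

Definition dualR := dualT alg_sigma_c E X.
HB.instance Definition _ := GRing.Zmodule.on dualR.

Lemma alg_sigma_c_central s (b : R^c) : alg_sigma_c s * b = b * alg_sigma_c s.
Proof. exact: (esym (alg_sigma_central s b)). Qed.

Lemma dualR_scaleP (b : R) (f : dualR) :
  Slinear alg_sigma_c (fun x : X => f ((b : R^c) *: x)).
Proof.
move=> s x y; rewrite scalerDr scalerA -alg_sigma_c_central -scalerA.
exact: dfunP.
Qed.

Definition dualR_scale (b : R) (f : dualR) : dualR := Dual (dualR_scaleP b f).

Lemma dualR_scalerA a b f :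
  dualR_scale a (dualR_scale b f) = dualR_scale (a * b) f.
Proof. by apply: dual_ext => x /=; rewrite scalerA. Qed.

Lemma dualR_scale1r : left_id 1 dualR_scale.
Proof. by move=> f; apply: dual_ext => x /=; rewrite scale1r. Qed.

Lemma dualR_scalerDr : right_distributive dualR_scale +%R.
Proof. by move=> b f g; apply: dual_ext => x. Qed.

Lemma dualR_scalerDl f : {morph dualR_scale^~ f : a b / a + b}.
Proof.
move=> a b; apply: dual_ext => x /=.
by rewrite scalerDl (Slinear_add _ alg_sigma_c1).
Qed.

HB.instance Definition _ :=
  GRing.Zmodule_isLmodule.Build R dualR
    dualR_scalerA dualR_scale1r dualR_scalerDr dualR_scalerDl.

End DualRight.

Section DualMap.
Variables (P1 P0 : lmodType R) (zeta : {linear P1 -> P0}).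

Lemma dualmap_subproof (phi : dualL P0) :
  Slinear alg_sigma (fun x : P1 => phi (zeta x)).
Proof. by move=> s x y; rewrite linearP; exact: dfunP. Qed.

Definition dualmap (phi : dualL P0) : dualL P1 := Dual (dualmap_subproof phi).

End DualMap.

End Duality.

Arguments dualL {S R} E X.
Arguments dualR {S R} E X.
Arguments dualmap {S R} E {P1 P0} zeta phi.

(* Main.v *)
Require Import Defs.
From HB Require Import structures.
From mathcomp Require Import all_boot all_algebra.
From Stdlib Require Import Classical ClassicalEpsilon FunctionalExtensionality ProofIrrelevance PropExtensionality.
Set Implicit Arguments.
Unset Strict Implicit.
Unset Printing Implicit Defensive.
Import GRing.Theory.
Local Open Scope ring_scope.

Definition mkLin (A : pzRingType) (U W : lmodType A) (f : U -> W) (H : linear f) : {linear U -> W} :=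
  HB.pack f (GRing.isLinear.Build A U W *:%R f H).

Lemma mkLinE (A : pzRingType) (U W : lmodType A) (f : U -> W) (H : linear f) x :
  mkLin H x = f x.
Proof. by []. Qed.

Section DF.
Variables (S : comNzRingType) (A : pzRingType) (sig : S -> A) (E : lmodType S) (X : lmodType A).
Hypothesis s1 : sig 1 = 1.
Implicit Types f : dualT sig E X.

Lemma dfun0 f : f 0 = 0.
Proof.
have := dfunP f 1 0 0; rewrite scaler0 add0r scale1r.
by rewrite -{1}(addr0 (f 0)) => /addrI.
Qed.
Lemma dfunD f x y : f (x + y) = f x + f y.
Proof. exact: Slinear_add. Qed.
Lemma dfunZ f s x : f (sig s *: x) = s *: f x.
Proof. by have := dfunP f s x 0; rewrite addr0 dfun0 addr0. Qed.
Lemma dfunN f x : f (- x) = - f x.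
Proof. by apply/eqP; rewrite -subr_eq0 opprK -dfunD addNr dfun0. Qed.
Lemma dfunB f x y : f (x - y) = f x - f y.
Proof. by rewrite dfunD dfunN. Qed.
Lemma dfun_sum f I r (P : pred I) (F : I -> X) :
  f (\sum_(i <- r | P i) F i) = \sum_(i <- r | P i) f (F i).
Proof. by elim/big_rec2: _ => [|i a b _ <-]; rewrite ?dfun0 ?dfunD. Qed.
Lemma dsumE I r (P : pred I) (F : I -> dualT sig E X) x :
  (\sum_(i <- r | P i) F i) x = \sum_(i <- r | P i) F i x.
Proof. by elim/big_rec2: _ => [|i a b _ <-]. Qed.
Lemma daddE f g x : (f + g) x = f x + g x. Proof. by []. Qed.
Lemma doppE f x : (- f) x = - f x. Proof. by []. Qed.
Lemma d0E x : (0 : dualT sig E X) x = 0. Proof. by []. Qed.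
End DF.

Section SresLemmas.
Variables (S : comNzRingType) (A : pzRingType) (sig : S -> A) (V : lmodType A).
Hypotheses (s1 : sig 1 = 1) (sM : forall a b, sig (a * b) = sig a * sig b)
  (sD : forall a b, sig (a + b) = sig a + sig b).
Definition sres_scale (a : S) (v : V) : V := sig a *: v.
Lemma sres_scalerA a b v : sres_scale a (sres_scale b v) = sres_scale (a * b) v.
Proof. by rewrite /sres_scale scalerA sM. Qed.
Lemma sres_scale1r : left_id 1 sres_scale.
Proof. by move=> v; rewrite /sres_scale s1 scale1r. Qed.
Lemma sres_scalerDr : right_distributive sres_scale +%R.
Proof. by move=> a u v; rewrite /sres_scale scalerDr. Qed.
Lemma sres_scalerDl v : {morph sres_scale^~ v : a b / a + b}.
Proof. by move=> a b; rewrite /sres_scale sD scalerDl. Qed.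
End SresLemmas.

Section Sres.
Variables (S : comNzRingType) (R : algType S).

Lemma asM (a b : S) : alg_sigma R (a * b) = alg_sigma R a * alg_sigma R b.
Proof. by rewrite /alg_sigma -scalerA mulr_algl. Qed.
Lemma asD (a b : S) : alg_sigma R (a + b) = alg_sigma R a + alg_sigma R b.
Proof. by rewrite /alg_sigma scalerDl. Qed.
Lemma ascM (a b : S) : alg_sigma_c R (a * b) = alg_sigma_c R a * alg_sigma_c R b.
Proof. by have := asM b a; rewrite mulrC. Qed.
Lemma ascD (a b : S) : alg_sigma_c R (a + b) = alg_sigma_c R a + alg_sigma_c R b.
Proof. by rewrite /alg_sigma_c scalerDl. Qed.

Definition SL (V : lmodType R) : Type := V.
HB.instance Definition _ (V : lmodType R) := GRing.Zmodule.on (SL V).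
HB.instance Definition _ (V : lmodType R) :=
  GRing.Zmodule_isLmodule.Build S (SL V)
   (@sres_scalerA S R (alg_sigma R) V asM)
   (@sres_scale1r S R (alg_sigma R) V (alg_sigma1 R))
   (@sres_scalerDr S R (alg_sigma R) V)
   (@sres_scalerDl S R (alg_sigma R) V asD).

Definition SR (V : lmodType R^c) : Type := V.
HB.instance Definition _ (V : lmodType R^c) := GRing.Zmodule.on (SR V).
HB.instance Definition _ (V : lmodType R^c) :=
  GRing.Zmodule_isLmodule.Build S (SR V)
   (@sres_scalerA S R^c (alg_sigma_c R) V ascM)
   (@sres_scale1r S R^c (alg_sigma_c R) V (alg_sigma_c1 R))
   (@sres_scalerDr S R^c (alg_sigma_c R) V)
   (@sres_scalerDl S R^c (alg_sigma_c R) V ascD).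

Lemma SLscaleE (V : lmodType R) (a : S) (v : SL V) : a *: v = (alg_sigma R a *: (v : V) : V).
Proof. by []. Qed.
Lemma SRscaleE (V : lmodType R^c) (a : S) (v : SR V) : a *: v = (alg_sigma_c R a *: (v : V) : V).
Proof. by []. Qed.
End Sres.

Section Quot.
Variables (S : comNzRingType) (V : lmodType S).
Definition closedS (P : V -> Prop) := P 0 /\ (forall a x y, P x -> P y -> P (a *: x - y)).
Variables (P : V -> Prop) (HP : closedS P).

Lemma cP0 : P 0. Proof. by case: HP. Qed.
Lemma cPN x : P x -> P (- x).
Proof. by case: HP => h0 h Hx; have := h 0 0 x h0 Hx; rewrite scaler0 add0r. Qed.
Lemma cPD x y : P x -> P y -> P (x + y).
Proof. by case: HP => h0 h Hx Hy; have := h 1 x (- y) Hx (cPN Hy); rewrite scale1r opprK. Qed.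
Lemma cPZ a x : P x -> P (a *: x).
Proof. by case: HP => h0 h Hx; have := h a x 0 Hx h0; rewrite subr0. Qed.
Lemma cPB x y : P x -> P y -> P (x - y).
Proof. by move=> Hx Hy; apply: cPD Hx (cPN Hy). Qed.

Definition rep (v : V) : V := epsilon (inhabits (0:V)) (fun w => P (w - v)).
Lemma repP v : P (rep v - v).
Proof. by apply: (epsilon_spec (inhabits 0) (fun w => P (w - v))); exists v; rewrite subrr; exact: cP0. Qed.
Lemma rep_eq u v : P (u - v) -> rep u = rep v.
Proof.
move=> H; rewrite /rep; congr epsilon; apply: functional_extensionality => w.
apply: propositional_extensionality; split => Hw.
  by have := cPD Hw H; rewrite addrA subrK.
by have := cPB Hw H; rewrite opprB addrA subrK.
Qed.
Lemma rep_rep v : rep (rep v) = rep v.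
Proof. exact: rep_eq (repP v). Qed.

Definition QuotT (_ : closedS P) := {v : V | rep v = v}.
HB.instance Definition _ := hasDecEq.Build (QuotT HP) (@ceqP (QuotT HP)).
HB.instance Definition _ :=
  hasChoice.Build (QuotT HP) (@cfind_correct (QuotT HP)) (@cfind_complete (QuotT HP)) (@cfind_ext (QuotT HP)).

Definition qpi (v : V) : (QuotT HP) := exist _ (rep v) (rep_rep v).
Lemma qpiE u v : qpi u = qpi v <-> P (u - v).
Proof.
split => [[]|H]; last by apply: eq_sig_hprop => [x p q|]; [exact: proof_irrelevance|exact: rep_eq].
move=> e; have := cPB (repP v) (repP u).
by rewrite e opprB addrC addrA subrK.
Qed.
Lemma qpi_val (x : (QuotT HP)) : qpi (sval x) = x.
Proof. by case: x => v e; apply: eq_sig_hprop => [x p q|] /=; [exact: proof_irrelevance|]. Qed.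
Lemma qpiDl u w : qpi (rep u + w) = qpi (u + w).
Proof. by apply/qpiE; rewrite opprD addrACA subrr addr0; exact: repP. Qed.
Lemma qpiDr u w : qpi (w + rep u) = qpi (w + u).
Proof. by rewrite addrC qpiDl addrC. Qed.
Lemma qpiN u : qpi (- rep u) = qpi (- u).
Proof. by apply/qpiE; have := cPN (repP u); rewrite opprD. Qed.
Lemma qpiZ a u : qpi (a *: rep u) = qpi (a *: u).
Proof. by apply/qpiE; rewrite -scalerBr; apply: cPZ; exact: repP. Qed.

Definition qzero := qpi 0.
Definition qadd (x y : (QuotT HP)) := qpi (sval x + sval y).
Definition qopp (x : (QuotT HP)) := qpi (- sval x).
Definition qscale a (x : (QuotT HP)) := qpi (a *: sval x).

Lemma qaddA : associative qadd.
Proof. by move=> x y z; rewrite /qadd /= qpiDl qpiDr addrA. Qed.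
Lemma qaddC : commutative qadd.
Proof. by move=> x y; rewrite /qadd addrC. Qed.
Lemma qadd0 : left_id qzero qadd.
Proof. by move=> x; rewrite /qadd /= qpiDl add0r qpi_val. Qed.
Lemma qaddN : left_inverse qzero qopp qadd.
Proof. by move=> x; rewrite /qadd /= qpiDl addNr. Qed.
HB.instance Definition _ := GRing.isZmodule.Build (QuotT HP) qaddA qaddC qadd0 qaddN.
Lemma qaddE (x y : (QuotT HP)) : x + y = qadd x y. Proof. by []. Qed.

Lemma qscalerA a b x : qscale a (qscale b x) = qscale (a * b) x.
Proof. by rewrite /qscale /= qpiZ scalerA. Qed.
Lemma qscale1r : left_id 1 qscale.
Proof. by move=> x; rewrite /qscale scale1r qpi_val. Qed.
Lemma qscalerDr : right_distributive qscale +%R.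
Proof. by move=> a x y; rewrite !qaddE /qscale /= /qadd /= qpiZ qpiDl qpiDr scalerDr. Qed.
Lemma qscalerDl x : {morph qscale^~ x : a b / a + b}.
Proof. by move=> a b; rewrite !qaddE /qscale /= /qadd /= qpiDl qpiDr scalerDl. Qed.
HB.instance Definition _ := GRing.Zmodule_isLmodule.Build S (QuotT HP) qscalerA qscale1r qscalerDr qscalerDl.
Lemma qscaleE a (x : (QuotT HP)) : a *: x = qscale a x. Proof. by []. Qed.

Lemma qpi_lin : linear qpi.
Proof.
move=> a u v; rewrite qaddE /qadd /= qpiDl qpiDr.
apply/qpiE; rewrite opprD addrACA subrr addr0 -scalerBr; apply: cPZ.
by have := cPN (repP u); rewrite opprB.
Qed.
Definition qlin : {linear V -> (QuotT HP)} := mkLin qpi_lin.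
Lemma qlinE v : qlin v = qpi v. Proof. by []. Qed.
Lemma qlin0 v : qlin v = 0 <-> P v.
Proof. by rewrite qlinE; split => [/qpiE|H]; [rewrite subr0|apply/qpiE; rewrite subr0]. Qed.
Lemma qlin_surj (x : (QuotT HP)) : exists v, qlin v = x.
Proof. by exists (sval x); rewrite qlinE qpi_val. Qed.
End Quot.

Section QuotLift.
Variables (S : comNzRingType) (V W : lmodType S) (P : V -> Prop) (HP : closedS P).
Variables (phi : {linear V -> W}) (Hphi : forall v, P v -> phi v = 0).
Lemma phi_rep v : phi (rep P v) = phi v.
Proof. by apply/eqP; rewrite -subr_eq0 -linearB Hphi //; exact: repP. Qed.
Lemma qlift_lin : linear (fun x : QuotT HP => phi (sval x)).
Proof.
by move=> a x y; rewrite qaddE /qadd /= phi_rep linearD phi_rep linearZ.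
Qed.
End QuotLift.

Section Ext.
Variables (S : comNzRingType) (E : lmodType S).
Hypotheses (E_inj : injective_module E) (E_cog : cogenerator_module E).

Lemma ext1 (U V : lmodType S) (g : {linear U -> V}) (f : {linear U -> E}) :
  (forall u, g u = 0 -> f u = 0) -> exists h : {linear V -> E}, forall u, h (g u) = f u.
Proof.
move=> Hk.
have HP : closedS (fun u => g u = 0).
  by split; [rewrite linear0|move=> a x y hx hy; rewrite linearB linearZ /= hx hy scaler0 subrr].
pose gb := mkLin (@qlift_lin _ _ _ _ HP g (fun v h => h)).
pose fb := mkLin (@qlift_lin _ _ _ _ HP f Hk).
have gbinj : injective gb.
  move=> x y; rewrite !mkLinE => e.
  rewrite -(qpi_val x) -(qpi_val y); apply/qpiE.
  by rewrite linearB /= e subrr.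
have [h Hh] := @E_inj _ _ gb fb gbinj.
exists h => u; have := Hh (qpi HP u); rewrite !mkLinE /=.
by rewrite (@phi_rep _ _ _ _ HP g (fun v h => h)) (@phi_rep _ _ _ _ HP f Hk).
Qed.

Lemma ext2 (V : lmodType S) (P : V -> Prop) (HP : closedS P) v :
  ~ P v -> exists f : {linear V -> E}, (forall x, P x -> f x = 0) /\ f v != 0.
Proof.
move=> nPv.
have glin : linear (fun s : S^o => (s : S) *: (qlin HP v : QuotT HP)).
  by move=> a s t; rewrite scalerDl scalerA.
pose g := mkLin glin.
have : exists u, g u != 0.
  exists 1; rewrite mkLinE scale1r; apply/eqP => /qlin0; exact: nPv.
case/E_cog => f [u Hu].
have flin : linear (fun x => f (qlin HP x)).
  by move=> a x y; rewrite !linearP.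
exists (mkLin flin); split => [x Px|]; rewrite mkLinE.
  by have /qlin0 -> := Px; rewrite linear0.
apply: contra Hu; rewrite mkLinE linearZ /= => /eqP ->; by rewrite scaler0.
Qed.
End Ext.

Lemma sum_delta (V : nmodType) n (i : 'I_n) (F : 'I_n -> V) :
  \sum_k (if k == i then F k else 0) = F i.
Proof. by rewrite -big_mkcond big_pred1_eq. Qed.

Section Main.
Variables (S : comNzRingType) (R : algType S) (E : lmodType S).
Hypotheses (E_inj : injective_module E) (E_cog : cogenerator_module E).

Lemma dLscaleE (Y : lmodType R) (r : R^c) (f : dualL E Y) y : (r *: f) y = f ((r : R) *: y).
Proof. by []. Qed.
Lemma dRscaleE (X : lmodType R^c) (r : R) (f : dualR E X) x : (r *: f) x = f ((r : R^c) *: x).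
Proof. by []. Qed.
Lemma dLD (Y : lmodType R) (f : dualL E Y) x y : f (x + y) = f x + f y.
Proof. exact: (dfunD (alg_sigma1 R)). Qed.
Lemma dL0 (Y : lmodType R) (f : dualL E Y) : f 0 = 0.
Proof. exact: dfun0. Qed.
Lemma dLZ (Y : lmodType R) (f : dualL E Y) a y : f (alg_sigma R a *: y) = a *: f y.
Proof. exact: dfunZ. Qed.
Lemma dLsum (Y : lmodType R) (f : dualL E Y) I r (P : pred I) (F : I -> Y) :
  f (\sum_(i <- r | P i) F i) = \sum_(i <- r | P i) f (F i).
Proof. exact: (dfun_sum (alg_sigma1 R)). Qed.
Lemma dRD (Y : lmodType R^c) (f : dualR E Y) x y : f (x + y) = f x + f y.
Proof. exact: (dfunD (alg_sigma_c1 R)). Qed.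
Lemma dR0 (Y : lmodType R^c) (f : dualR E Y) : f 0 = 0.
Proof. exact: dfun0. Qed.
Lemma dRZ (Y : lmodType R^c) (f : dualR E Y) a y : f (alg_sigma_c R a *: y) = a *: f y.
Proof. exact: dfunZ. Qed.

Definition lin (X : lmodType R^c) m n (c : 'I_m -> 'I_n -> R) (s : 'I_m -> X) : 'I_n -> X :=
  fun i => \sum_j (c j i : R^c) *: s j.
Definition rlin (Y : lmodType R) m n (c : 'I_m -> 'I_n -> R) (y : 'I_n -> Y) : 'I_m -> Y :=
  fun j => \sum_i c j i *: y i.

Lemma cscaleA (X : lmodType R^c) (a b : R) (x : X) :
  (a : R^c) *: ((b : R^c) *: x) = ((b * a : R) : R^c) *: x.
Proof. by rewrite scalerA. Qed.

Lemma alg_c_comm (X : lmodType R^c) (a : S) (b : R) (x : X) :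
  (b : R^c) *: (alg_sigma_c R a *: x) = alg_sigma_c R a *: ((b : R^c) *: x).
Proof. by rewrite !scalerA; congr (_ *: _); rewrite alg_sigma_c_central. Qed.
Lemma alg_comm (Y : lmodType R) (a : S) (b : R) (y : Y) :
  b *: (alg_sigma R a *: y) = alg_sigma R a *: (b *: y).
Proof. by rewrite !scalerA alg_sigma_central. Qed.

Lemma sum_delta' (V : nmodType) n (i : 'I_n) (F : 'I_n -> V) :
  \sum_k (if i == k then F k else 0) = F i.
Proof. by under eq_bigr do rewrite eq_sym; exact: sum_delta. Qed.

Definition dl (Y : lmodType R) m (j : 'I_m) (y : Y) : SL {ffun 'I_m -> Y} :=
  [ffun j' => if j' == j then y else 0].

Lemma rlin_dl (Y : lmodType R) m n (c : 'I_m -> 'I_n -> R) i (y : Y) j :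
  rlin c (dl i y) j = c j i *: y.
Proof.
rewrite /rlin (bigD1 i) //= ffunE eqxx big1 ?addr0 // => k /negbTE.
by rewrite ffunE => ->; rewrite scaler0.
Qed.

Lemma KL (Y : lmodType R) m n (c : 'I_m -> 'I_n -> R) (t : 'I_n -> dualL E Y) :
  (forall y : 'I_n -> Y, (forall j, rlin c y j = 0) -> \sum_i t i (y i) = 0) ->
  exists s : 'I_m -> dualL E Y, forall i, t i = lin c s i.
Proof.
move=> Ht.
have thlin : linear (fun y : SL {ffun 'I_n -> Y} => \sum_i t i (y i)).
  move=> a y y'; rewrite scaler_sumr -big_split /=; apply: eq_bigr => i _.
  by rewrite !ffunE dLD dLZ.
pose th := mkLin thlin.
have glin : linear (fun y : SL {ffun 'I_n -> Y} => ([ffun j => rlin c y j] : SL {ffun 'I_m -> Y})).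
  move=> a y y'; apply/ffunP => j; rewrite !ffunE /rlin scaler_sumr -big_split.
  by apply: eq_bigr => i _; rewrite !ffunE scalerDr alg_comm.
pose g := mkLin glin.
have [sg Hsg] : exists sg : {linear SL {ffun 'I_m -> Y} -> E}, forall u, sg (g u) = th u.
  apply: (ext1 E_inj) => y; rewrite !mkLinE => hy; apply: Ht => j.
  by have := congr1 (fun f : {ffun 'I_m -> Y} => f j) hy; rewrite !ffunE.
have sP j : Slinear (alg_sigma R) (fun y => sg (dl j y)).
  move=> a y y'; rewrite -linearP; apply: f_equal; apply/ffunP => j'.
  by rewrite !ffunE; case: (_ == j); rewrite ?scaler0 ?addr0.
exists (fun j => Dual (sP j)) => i; apply: dual_ext => y /=.
rewrite /lin dsumE.
under eq_bigr do rewrite dLscaleE /=.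
rewrite -linear_sum /=.
have -> : \sum_j dl j (c j i *: y) = g (dl i y).
  apply/ffunP => j'; rewrite sum_ffunE mkLinE !ffunE rlin_dl.
  by under eq_bigr do rewrite ffunE; rewrite sum_delta'.
rewrite Hsg mkLinE.
under eq_bigr => k _ do rewrite ffunE (fun_if (t k)) dL0.
by rewrite (sum_delta i (fun k => t k y)).
Qed.

Lemma dl_lin (Y : lmodType R) m (j : 'I_m) a (y y' : Y) :
  dl j (alg_sigma R a *: y + y') = a *: dl j y + dl j y'.
Proof. by apply/ffunP => j'; rewrite !ffunE; case: (j' == j); rewrite ?scaler0 ?addr0. Qed.

Lemma dl_Slin (Y : lmodType R) m (j : 'I_m) (f : {linear SL {ffun 'I_m -> Y} -> E}) :
  Slinear (alg_sigma R) (fun y => f (dl j y)).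
Proof. by move=> a y y'; rewrite dl_lin linearP. Qed.

Lemma ffun_dl (Y : lmodType R) m (ff : {ffun 'I_m -> Y}) :
  (ff : SL {ffun 'I_m -> Y}) = \sum_k dl k (ff k).
Proof.
apply/ffunP => j; rewrite sum_ffunE.
by under eq_bigr do rewrite ffunE; rewrite sum_delta'.
Qed.

Lemma pairL (Y : lmodType R) p q (c : 'I_p -> 'I_q -> R) (t : 'I_p -> dualL E Y) (y : 'I_q -> Y) :
  \sum_l (lin c t l) (y l) = \sum_k t k (rlin c y k).
Proof.
rewrite /lin /rlin; under eq_bigr do rewrite dsumE.
rewrite exchange_big /=; apply: eq_bigr => k _.
by rewrite dLsum; apply: eq_bigr.
Qed.

Lemma pairR (X : lmodType R^c) (P : lmodType R) (h : {linear X -> dualL E P}) p q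
  (c : 'I_p -> 'I_q -> R) (s : 'I_p -> X) (vv : 'I_q -> P) :
  \sum_l h (lin c s l) (vv l) = \sum_k h (s k) (\sum_l c k l *: vv l).
Proof.
rewrite /lin; under eq_bigr do rewrite linear_sum dsumE.
rewrite exchange_big /=; apply: eq_bigr => k _.
rewrite dLsum; apply: eq_bigr => l _.
by rewrite linearZ.
Qed.

Lemma linP (X : lmodType R^c) p q (c : 'I_p -> 'I_q -> R) (s s1 s2 : 'I_p -> X) e l :
  (forall j, s j = alg_sigma_c R e *: s1 j + s2 j) ->
  lin c s l = alg_sigma_c R e *: lin c s1 l + lin c s2 l.
Proof.
move=> H; rewrite /lin scaler_sumr -big_split; apply: eq_bigr => j _.
by rewrite H scalerDr alg_c_comm.
Qed.
Lemma lin_ext (X : lmodType R^c) p q (c : 'I_p -> 'I_q -> R) (s s' : 'I_p -> X) l :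
  (forall j, s j = s' j) -> lin c s l = lin c s' l.
Proof. by move=> H; rewrite /lin; apply: eq_bigr => j _; rewrite H. Qed.
Lemma lin0 (X : lmodType R^c) p q (c : 'I_p -> 'I_q -> R) (s : 'I_p -> X) l :
  (forall j, s j = 0) -> lin c s l = 0.
Proof. by move=> H; rewrite /lin big1 // => j _; rewrite H scaler0. Qed.
Lemma linN (X : lmodType R^c) p q (c : 'I_p -> 'I_q -> R) (s : 'I_p -> X) l :
  lin c (fun j => - s j) l = - lin c s l.
Proof. by rewrite /lin -sumrN; apply: eq_bigr => j _; rewrite scalerN. Qed.
Lemma linB (X : lmodType R^c) p q (c : 'I_p -> 'I_q -> R) (s1 s2 : 'I_p -> X) e l :
  lin c (fun j => alg_sigma_c R e *: s1 j - s2 j) l = alg_sigma_c R e *: lin c s1 l - lin c s2 l.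
Proof. by rewrite (@linP X p q c _ s1 (fun j => - s2 j) e) // linN. Qed.
Lemma rlinB (Y : lmodType R) p q (c : 'I_p -> 'I_q -> R) (y1 y2 : 'I_q -> Y) e j :
  rlin c (fun l => alg_sigma R e *: y1 l - y2 l) j = alg_sigma R e *: rlin c y1 j - rlin c y2 j.
Proof.
rewrite /rlin scaler_sumr -sumrB; apply: eq_bigr => l _.
by rewrite scalerBr alg_comm.
Qed.

Lemma rmap_lin (Z : lmodType R^c) (x : Z) : linear (fun r : (R^c)^o => (r : R^c) *: x).
Proof. by move=> c r r'; rewrite scalerDl scalerA. Qed.

Lemma prod_elem (I : Type) (M : I -> lmodType R^c) (D : lmodType R^c)
  (pr : forall i, {linear D -> M i}) : is_product pr ->
  forall x : forall i, M i, exists d, forall i, pr i d = x i.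
Proof.
move=> Hp x.
have flin i : linear (fun r : (R^c)^o => (r : R^c) *: x i).
  by move=> c r r'; rewrite scalerDl scalerA.
have [[h Hh] _] := Hp _ (fun i => mkLin (flin i)).
by exists (h 1) => i; rewrite Hh mkLinE scale1r.
Qed.

Lemma prod_eq (I : Type) (M : I -> lmodType R^c) (D : lmodType R^c)
  (pr : forall i, {linear D -> M i}) : is_product pr ->
  forall d d', (forall i, pr i d = pr i d') -> d = d'.
Proof.
move=> Hp d d' H.
have [_ Hu] := Hp _ (fun i => mkLin (rmap_lin (pr i d))).
have := Hu (mkLin (rmap_lin d)) (mkLin (rmap_lin d')) _ 1.
rewrite !mkLinE !scale1r; apply => i x; rewrite !mkLinE !linearZ /=.
by rewrite H.
Qed.

Lemma pr_lin (X M : lmodType R^c) (pr : {linear X -> M}) p q (c : 'I_p -> 'I_q -> R) (s : 'I_p -> X) l :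
  pr (lin c s l) = lin c (fun j => pr (s j)) l.
Proof. by rewrite /lin linear_sum; apply: eq_bigr => j _; rewrite linearZ. Qed.

Section FP.
Variables (P : lmodType R) (n m : nat) (v : 'I_n -> P) (w : 'I_m -> 'I_n -> R).
Hypothesis Hgen : forall p, exists a : 'I_n -> R, p = \sum_i a i *: v i.
Hypothesis Hrel : forall a : 'I_n -> R, \sum_i a i *: v i = 0 <->
       exists c : 'I_m -> R, forall i, a i = \sum_j c j * w j i.

Definition coef (p : P) : 'I_n -> R :=
  proj1_sig (constructive_indefinite_description _ (Hgen p)).
Lemma coefP p : p = \sum_i coef p i *: v i.
Proof. exact: proj2_sig (constructive_indefinite_description _ (Hgen p)). Qed.

Lemma coef_indep (V : zmodType) (F : ('I_n -> R) -> V) :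
  (forall a b, F (fun i => a i + b i) = F a + F b) ->
  (forall c : 'I_m -> R, F (fun i => \sum_j c j * w j i) = 0) ->
  forall p a, p = \sum_i a i *: v i -> F a = F (coef p).
Proof.
move=> FD Fr p a e.
have : \sum_i (a i - coef p i) *: v i = 0.
  by under eq_bigr do rewrite scalerBl; rewrite sumrB -e -coefP subrr.
case/Hrel => c Hc.
have -> : a = fun i => coef p i + \sum_j c j * w j i.
  by apply: functional_extensionality => i; rewrite -Hc addrC subrK.
by rewrite FD Fr addr0.
Qed.

Lemma coef_lin r p q : \sum_i (r * coef p i + coef q i) *: v i = r *: p + q.
Proof.
rewrite [in RHS](coefP p) [in RHS](coefP q) scaler_sumr -big_split /=.
by apply: eq_bigr => i _; rewrite scalerDl scalerA.
Qed.

Lemma coef_delta i : v i = \sum_k (if k == i then 1 else 0) *: v k.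
Proof.
rewrite (bigD1 i) //= eqxx scale1r big1 ?addr0 // => k /negbTE ->.
by rewrite scale0r.
Qed.

Lemma fp_map (Y : lmodType R) (y : 'I_n -> Y) : (forall j, rlin w y j = 0) ->
  exists f : {linear P -> Y}, forall a, f (\sum_i a i *: v i) = \sum_i a i *: y i.
Proof.
move=> Hy.
pose F (a : 'I_n -> R) := \sum_i a i *: y i.
have FD a b : F (fun i => a i + b i) = F a + F b.
  by rewrite /F -big_split; apply: eq_bigr => i _; rewrite scalerDl.
have Fr c : F (fun i => \sum_j c j * w j i) = 0.
  rewrite /F; under eq_bigr do rewrite scaler_suml.
  rewrite exchange_big big1 // => j _.
  by under eq_bigr do rewrite -scalerA; rewrite -scaler_sumr -/(rlin w y j) Hy scaler0.
have Find := coef_indep FD Fr.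
have flin : linear (fun p => F (coef p)).
  move=> r p q; rewrite -(Find _ _ (esym (coef_lin r p q))) /F scaler_sumr -big_split.
  by apply: eq_bigr => i _; rewrite scalerDl scalerA.
exists (mkLin flin) => a; rewrite mkLinE.
by rewrite -(Find _ a erefl).
Qed.
Lemma rel_zero j : \sum_i w j i *: v i = 0.
Proof.
apply/Hrel; exists (fun j' => if j' == j then 1 else 0) => i.
by under eq_bigr do rewrite (fun_if (fun x => x * w _ i)) mul1r mul0r; rewrite sum_delta.
Qed.

Lemma coef_scale r p : \sum_i (r * coef p i) *: v i = r *: p.
Proof.
by rewrite [in RHS](coefP p) scaler_sumr; apply: eq_bigr => i _; rewrite scalerA.
Qed.

Lemma mkdual (X : lmodType R^c) (Psi : {linear SR {ffun 'I_n -> X} -> E}) :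
  (forall s, Psi [ffun i => lin w s i] = 0) ->
  exists h : {linear X -> dualL E P}, forall x (c : 'I_n -> R),
    h x (\sum_i c i *: v i) = Psi [ffun i => (c i : R^c) *: x].
Proof.
move=> HPsi.
pose F (x : X) (c : 'I_n -> R) := Psi [ffun i => (c i : R^c) *: x].
have FD x a b : F x (fun i => a i + b i) = F x a + F x b.
  rewrite /F -linearD; apply: f_equal; apply/ffunP => i; rewrite !ffunE.
  by rewrite scalerDl.
have Fr x c : F x (fun i => \sum_j c j * w j i) = 0.
  rewrite /F -(HPsi (fun j => (c j : R^c) *: x)); apply: f_equal; apply/ffunP => i.
  rewrite !ffunE /lin scaler_suml; apply: eq_bigr => j _.
  by rewrite cscaleA.
have Find x := coef_indep (FD x) (Fr x).
have hP x : Slinear (alg_sigma R) (fun p => F x (coef p)).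
  move=> a p q.
  rewrite -(Find x _ _ (esym (coef_lin (alg_sigma R a) p q))) FD -linearZ.
  congr (_ + _); rewrite /F; apply: f_equal; apply/ffunP => i.
  by rewrite SRscaleE !ffunE cscaleA -alg_sigma_central.
pose hf x : dualL E P := Dual (hP x).
have hlin : linear hf.
  move=> r x y; apply: dual_ext => p /=.
  rewrite -(Find x _ _ (esym (coef_scale r p))) /F -linearD.
  apply: f_equal; apply/ffunP => i; rewrite !ffunE scalerDr.
  by rewrite cscaleA.
exists (mkLin hlin) => x c; rewrite mkLinE /=.
by rewrite -(Find x _ c erefl).
Qed.
End FP.

Section Adj.
Variables (N : lmodType R^c) (P : lmodType R).

Lemma adjR_S (g : {linear P -> dualR E N}) (x : N) : Slinear (alg_sigma R) (fun p => g p x).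
Proof. by move=> c p q; rewrite linearP daddE dRscaleE; congr (_ + _); exact: dRZ. Qed.
Lemma adjR_lin (g : {linear P -> dualR E N}) :
  linear (fun x => (Dual (adjR_S g x) : dualL E P)).
Proof.
move=> r x y; apply: dual_ext => p /=.
by rewrite dRD linearZ dRscaleE.
Qed.
Definition adjR (g : {linear P -> dualR E N}) : {linear N -> dualL E P} := mkLin (adjR_lin g).
Lemma adjRE g x p : adjR g x p = g p x. Proof. by []. Qed.

Lemma adjL_S (h : {linear N -> dualL E P}) (p : P) : Slinear (alg_sigma_c R) (fun x => h x p).
Proof. by move=> c x y; rewrite linearP daddE dLscaleE; congr (_ + _); exact: dLZ. Qed.
Lemma adjL_lin (h : {linear N -> dualL E P}) :
  linear (fun p => (Dual (adjL_S h p) : dualR E N)).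
Proof.
move=> r p q; apply: dual_ext => x /=.
by rewrite dLD linearZ dLscaleE.
Qed.
Definition adjL (h : {linear N -> dualL E P}) : {linear P -> dualR E N} := mkLin (adjL_lin h).
Lemma adjLE h p x : adjL h p x = h x p. Proof. by []. Qed.
End Adj.

Lemma part1 (P1 P0 : lmodType R) (zeta : {linear P1 -> P0}) (X : lmodType R^c) :
  Bclass (dualmap E zeta) X -> Dclass zeta (dualR E X).
Proof.
move=> HB g; have [h' Hh'] := HB (adjR g).
exists (adjL h') => p; apply: dual_ext => x.
by rewrite adjLE -[LHS](adjRE g) Hh'.
Qed.

Lemma dualmap_lin (M D : lmodType R) (f : {linear M -> D}) : linear (dualmap E f).
Proof.
move=> r x y; apply: dual_ext => m /=.
by rewrite linearZ.
Qed.
Definition dmapL (M D : lmodType R) (f : {linear M -> D}) : {linear dualL E D -> dualL E M} :=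
  mkLin (dualmap_lin f).

Lemma dual_coprod (I : Type) (M : I -> lmodType R) (D : lmodType R)
  (inj : forall i, {linear M i -> D}) : is_coproduct inj ->
  is_product (M := fun i => dualL E (M i)) (fun i => dmapL (inj i)).
Proof.
move=> Hc N f; have [[H HH] Hu] := Hc (dualR E N) (fun i => adjL (f i)).
split.
  exists (adjR H) => i x; apply: dual_ext => m.
  by rewrite mkLinE /= HH adjLE.
move=> h1 h2 H12 x; apply: dual_ext => d.
rewrite -[LHS](adjLE h1) -[RHS](adjLE h2); congr dfun.
apply: Hu => i m; apply: dual_ext => y; rewrite !adjLE.
by have := congr1 (fun g => dfun g m) (H12 i y); rewrite !mkLinE.
Qed.

Section Pres.
Variables (P1 P0 : lmodType R) (zeta : {linear P1 -> P0}).
Variables (a m1 : nat) (u : 'I_a -> P1) (w1 : 'I_m1 -> 'I_a -> R).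
Hypothesis Hgen1 : forall p, exists c : 'I_a -> R, p = \sum_i c i *: u i.
Hypothesis Hrel1 : forall c : 'I_a -> R, \sum_i c i *: u i = 0 <->
       exists d : 'I_m1 -> R, forall i, c i = \sum_j d j * w1 j i.
Variables (b m0 : nat) (v : 'I_b -> P0) (w0 : 'I_m0 -> 'I_b -> R).
Hypothesis Hgen0 : forall p, exists c : 'I_b -> R, p = \sum_i c i *: v i.
Hypothesis Hrel0 : forall c : 'I_b -> R, \sum_i c i *: v i = 0 <->
       exists d : 'I_m0 -> R, forall i, c i = \sum_j d j * w0 j i.
Variable z : 'I_a -> 'I_b -> R.
Hypothesis Hz : forall k, zeta (u k) = \sum_l z k l *: v l.

Definition Dsys (Y : lmodType R) :=
  forall y : 'I_a -> Y, (forall j, rlin w1 y j = 0) ->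
  exists y' : 'I_b -> Y, (forall j, rlin w0 y' j = 0) /\ forall k, y k = rlin z y' k.

Definition Tc (X : lmodType R^c) :=
  forall (t : 'I_a -> X) (s : 'I_m0 -> X), (forall l, lin z t l = lin w0 s l) ->
  exists s' : 'I_m1 -> X, forall k, t k = lin w1 s' k.

Lemma sum_u (Y : lmodType R) (f : {linear P1 -> Y}) (c : 'I_a -> R) :
  f (\sum_i c i *: u i) = \sum_i c i *: f (u i).
Proof. by rewrite linear_sum; apply: eq_bigr => i _; rewrite linearZ. Qed.

Lemma zeta_sum (c : 'I_a -> R) :
  zeta (\sum_k c k *: u k) = \sum_l (\sum_k c k * z k l) *: v l.
Proof.
rewrite sum_u; under eq_bigr do rewrite Hz scaler_sumr.
rewrite exchange_big /=; apply: eq_bigr => l _.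
by rewrite scaler_suml; apply: eq_bigr => k _; rewrite scalerA.
Qed.

Lemma D_Dsys Y : Dclass zeta Y -> Dsys Y.
Proof.
move=> HD y Hy.
have [f Hf] := fp_map Hgen1 Hrel1 Hy.
have [h Hh] := HD f.
exists (fun l => h (v l)); split => [j|k].
  rewrite /rlin; under eq_bigr do rewrite -linearZ.
  by rewrite -linear_sum (rel_zero Hrel0) linear0.
rewrite /rlin; under eq_bigr do rewrite -linearZ; rewrite -linear_sum -Hz -Hh.
rewrite (coef_delta u k) Hf.
by under eq_bigr do rewrite (fun_if (fun x => x *: y _)) scale1r scale0r; rewrite sum_delta.
Qed.

Lemma Dsys_D Y : Dsys Y -> Dclass zeta Y.
Proof.
move=> HS g.
have [y' [Hy'0 Hy'z]] : exists y' : 'I_b -> Y, (forall j, rlin w0 y' j = 0) /\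
    forall k, g (u k) = rlin z y' k.
  apply: HS => j; rewrite /rlin; under eq_bigr do rewrite -linearZ.
  by rewrite -linear_sum (rel_zero Hrel1) linear0.
have [h Hh] := fp_map Hgen0 Hrel0 Hy'0.
exists h => x; rewrite (coefP Hgen1 x) zeta_sum Hh sum_u.
under eq_bigr do rewrite Hy'z /rlin scaler_sumr.
rewrite exchange_big /=; apply: eq_bigr => l _.
by rewrite scaler_suml; apply: eq_bigr => k _; rewrite scalerA.
Qed.

Lemma Dsys_T Y : Dsys Y -> Tc (dualL E Y).
Proof.
move=> HS t s Hts; apply: KL => y Hy.
have [y' [Hy'0 Hy'z]] := HS y Hy.
rewrite (eq_bigr (fun k => t k (rlin z y' k))) => [|k _]; last by rewrite Hy'z.
rewrite -pairL; under eq_bigr do rewrite Hts.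
by rewrite pairL big1 // => j _; rewrite Hy'0 dL0.
Qed.

Lemma T_Dsys Y : Tc (dualL E Y) -> Dsys Y.
Proof.
move=> HT y Hy; apply: NNPP => Hno.
pose Pz (ff : SL {ffun 'I_a -> Y}) := exists y' : 'I_b -> Y,
  (forall j, rlin w0 y' j = 0) /\ forall k, ff k = rlin z y' k.
have HP : closedS Pz.
  split.
    exists (fun _ => 0); split => [j|k]; rewrite /rlin ?ffunE big1 // => i _; by rewrite scaler0.
  move=> c x x' [y1 [h1 e1]] [y2 [h2 e2]].
  exists (fun l => alg_sigma R c *: y1 l - y2 l); split => [j|k].
    by rewrite rlinB h1 h2 scaler0 subrr.
  by rewrite rlinB !ffunE e1 e2.
have nP : ~ Pz [ffun k => y k].
  move=> [y' [h1 e1]]; apply: Hno; exists y'; split => // k.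
  by rewrite -e1 ffunE.
have [f [fP fy]] := ext2 E_cog HP nP.
pose t k : dualL E Y := Dual (dl_Slin k f).
have [s Hs] : exists s : 'I_m0 -> dualL E Y, forall l, lin z t l = lin w0 s l.
  apply: KL => y' Hy'; rewrite pairL /= -linear_sum.
  have -> : \sum_k dl k (rlin z y' k) = ([ffun k => rlin z y' k] : SL _).
    by rewrite (ffun_dl [ffun k => rlin z y' k]); apply: eq_bigr => k _; rewrite ffunE.
  by apply: fP; exists y'; split => // k; rewrite ffunE.
have [s' Hs'] := HT t s Hs.
move: fy; rewrite (ffun_dl [ffun k => y k]) linear_sum.
under eq_bigr do rewrite ffunE.
rewrite (eq_bigr (fun k => t k (y k))) // (eq_bigr (fun k => lin w1 s' k (y k))) => [|k _]; last by rewrite Hs'.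
by rewrite pairL big1 ?eqxx // => j _; rewrite Hy dL0.
Qed.

Lemma T_B X : Tc X -> Bclass (dualmap E zeta) X.
Proof.
move=> HT g.
pose U := SR ({ffun 'I_a -> X} * {ffun 'I_m0 -> X})%type.
pose V := SR {ffun 'I_b -> X}.
have g1lin : linear (fun ts : U => ([ffun l => lin z ts.1 l + lin w0 ts.2 l] : V)).
  move=> c x y; apply/ffunP => l; rewrite !ffunE /=.
  rewrite (@linP X a b z _ x.1 y.1 c l) => [|j]; last by rewrite !ffunE.
  rewrite (@linP X m0 b w0 _ x.2 y.2 c l) => [|j]; last by rewrite !ffunE.
  by rewrite scalerDr addrACA.
pose g1 := mkLin g1lin.
have Philin : linear (fun ts : U => \sum_k g (ts.1 k) (u k)).
  move=> c x y; rewrite scaler_sumr -big_split; apply: eq_bigr => k _ /=.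
  by rewrite !ffunE linearD linearZ /=; congr (_ + _); exact: dLZ.
pose Phi := mkLin Philin.
have [Psi HPsi] : exists Psi : {linear V -> E}, forall ts, Psi (g1 ts) = Phi ts.
  apply: (ext1 E_inj) => ts; rewrite !mkLinE => H.
  have H' l : lin z ts.1 l = lin w0 (fun j => - ts.2 j) l.
    have := congr1 (fun f : {ffun 'I_b -> X} => f l) H; rewrite !ffunE linN.
    by move/eqP; rewrite addr_eq0 => /eqP.
  have [s' Hs'] := HT _ _ H'.
  rewrite (eq_bigr (fun k => g (lin w1 s' k) (u k))) => [|k _]; last by rewrite Hs'.
  by rewrite pairR big1 // => j _; rewrite (rel_zero Hrel1) dL0.
have HPsi0 s : Psi [ffun l => lin w0 s l] = 0.
  have := HPsi (0, [ffun j => s j]); rewrite !mkLinE /=.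
  rewrite big1 => [|k _]; last by rewrite ffunE linear0.
  move=> <-; apply: f_equal; apply/ffunP => l; rewrite !ffunE.
  rewrite [lin z _ l]lin0 => [|j]; last by rewrite ffunE.
  by rewrite add0r; apply: lin_ext => j; rewrite ffunE.
have [h Hh] := mkdual Hgen0 Hrel0 HPsi0.
exists h => x; apply: dual_ext => p /=.
rewrite (coefP Hgen1 p) zeta_sum Hh dLsum.
have := HPsi ([ffun k => (coef Hgen1 p k : R^c) *: x], 0); rewrite !mkLinE /=.
rewrite (eq_bigr (fun k => g x (coef Hgen1 p k *: u k))) => [|k _]; last first.
  by rewrite ffunE linearZ.
move=> <-; apply: f_equal; apply/ffunP => l; rewrite !ffunE.
rewrite [lin w0 _ l]lin0 => [|j]; last by rewrite ffunE.
rewrite addr0 /lin scaler_suml; apply: eq_bigr => k _.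
by rewrite ffunE cscaleA.
Qed.

Lemma B_T X : Bclass (dualmap E zeta) X -> Tc X.
Proof.
move=> HB t s Hts; apply: NNPP => Hno.
pose Pim (ff : SR {ffun 'I_a -> X}) := exists s' : 'I_m1 -> X, forall k, ff k = lin w1 s' k.
have HP : closedS Pim.
  split.
    by exists (fun _ => 0) => k; rewrite ffunE lin0.
  move=> c x x' [s1 e1] [s2 e2].
  exists (fun j => alg_sigma_c R c *: s1 j - s2 j) => k.
  by rewrite linB !ffunE e1 e2.
have nP : ~ Pim [ffun k => t k].
  by move=> [s' e1]; apply: Hno; exists s' => k; rewrite -e1 ffunE.
have [f [fP ft]] := ext2 E_cog HP nP.
have HPsi s' : f [ffun k => lin w1 s' k] = 0.
  by apply: fP; exists s' => k; rewrite ffunE.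
have [g Hg] := mkdual Hgen1 Hrel1 HPsi.
have [h0 Hh0] := HB g.
have e1 : \sum_k g (t k) (u k) = f [ffun k => t k].
  under eq_bigr do rewrite (coef_delta u) Hg.
  rewrite -linear_sum; apply: f_equal; apply/ffunP => k'.
  rewrite sum_ffunE ffunE (bigD1 k') //= ffunE eqxx scale1r big1 ?addr0 // => k /negbTE.
  by rewrite ffunE eq_sym => ->; rewrite scale0r.
move: ft; rewrite -e1.
rewrite (eq_bigr (fun k => h0 (t k) (zeta (u k)))) => [|k _]; last by rewrite Hh0.
under eq_bigr do rewrite Hz.
rewrite -pairR; under eq_bigr do rewrite Hts.
by rewrite pairR big1 ?eqxx // => j _; rewrite (rel_zero Hrel0) dL0.
Qed.

Lemma T_prod : closed_under_products Tc.
Proof.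
move=> I M D pr Hp HT t s Hts.
have H i : exists s' : 'I_m1 -> M i, forall k, pr i (t k) = lin w1 s' k.
  by apply: (HT i (fun k => pr i (t k)) (fun j => pr i (s j))) => l; rewrite -!pr_lin Hts.
pose ss i := proj1_sig (constructive_indefinite_description _ (H i)).
have Hss i k : pr i (t k) = lin w1 (ss i) k.
  exact: (proj2_sig (constructive_indefinite_description _ (H i)) k).
pose e j := proj1_sig (constructive_indefinite_description _ (prod_elem Hp (fun i => ss i j))).
have He j i : pr i (e j) = ss i j.
  exact: (proj2_sig (constructive_indefinite_description _ (prod_elem Hp (fun i => ss i j))) i).
exists e => k; apply: (prod_eq Hp) => i.
by rewrite pr_lin Hss; apply: lin_ext => j; rewrite He.
Qed.

Lemma part2 Y : Dclass zeta Y -> Bclass (dualmap E zeta) (dualL E Y).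
Proof. by move=> HD; apply: T_B; apply: Dsys_T; apply: D_Dsys. Qed.

Lemma part3 M : partial_silting zeta M <-> partial_cosilting (dualmap E zeta) (dualL E M).
Proof.
split=> [[HM _]|[HM _]]; split.
- exact: part2.
- move=> I Mf D pr Hp HB; apply: T_B; apply: (T_prod Hp) => i; apply: B_T; exact: HB.
- by apply: Dsys_D; apply: T_Dsys; apply: B_T.
- move=> I Mf D inj Hc HD; apply: Dsys_D; apply: T_Dsys.
  apply: (T_prod (dual_coprod Hc)) => i; apply: Dsys_T; apply: D_Dsys; exact: HD.
Qed.
End Pres.

End Main.

Unset Implicit Arguments.
Set Strict Implicit.

Theorem proposition3p6
  (S : comNzRingType) (R : algType S) (E : lmodType S)
  (E_inj : injective_module E) (E_cog : cogenerator_module E)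
  (M P0 P1 P2 : lmodType R)
  (xi : {linear P2 -> P1}) (zeta : {linear P1 -> P0}) (pi : {linear P0 -> M})
  (pres : projective_presentation xi zeta pi) :
  (* (1) *)
  (forall X : lmodType R^c,
      Bclass (dualmap E zeta) X -> Dclass zeta (dualR E X)) /\
  (* (2) *)
  (finitely_presented P0 -> finitely_presented P1 -> finitely_presented P2 ->
   forall Y : lmodType R,
      Dclass zeta Y -> Bclass (dualmap E zeta) (dualL E Y)) /\
  (* (3) *)
  (finitely_presented P0 -> finitely_presented P1 -> finitely_presented P2 ->
   (partial_silting zeta M <-> partial_cosilting (dualmap E zeta) (dualL E M))).
Proof.
split; first by move=> X; exact: part1.
have key : finitely_presented P0 -> finitely_presented P1 ->
  (forall Y : lmodType R, Dclass zeta Y -> Bclass (dualmap E zeta) (dualL E Y)) /\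
  (partial_silting zeta M <-> partial_cosilting (dualmap E zeta) (dualL E M)).
  move=> [b [m0 [v [w0 [Hgen0 Hrel0]]]]] [a [m1 [u [w1 [Hgen1 Hrel1]]]]].
  pose z k := coef Hgen0 (zeta (u k)).
  have Hz k : zeta (u k) = \sum_l z k l *: v l by exact: coefP.
  split; [move=> Y; exact: (part2 E_inj Hgen1 Hrel1 Hgen0 Hrel0 Hz)|].
  exact: (part3 E_inj E_cog Hgen1 Hrel1 Hgen0 Hrel0 Hz).
by split=> h0 h1 _; have [k1 k2] := key h0 h1.
Qed.
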